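(* Let $\beta\in(1,3/2]$. The restriction $\varphi'=\varphi|_Z:Z\to D$ is a bijection which is measurable with measurable inverse.
   Context: $\vec q_0=(0,0)$, $\vec q_1=(1,0)$, $\vec q_2=(0,1)$; $S_\beta$ is the attractor of the IFS $f_{\vec q_i}(\vec z)=(\vec z+\vec q_i)/\beta$ (for $1<\beta\le3/2$ the closed triangle with vertices $(0,0)$, $(\frac1{\beta-1},0)$, $(0,\frac1{\beta-1})$), with Borel $\sigma$-algebra. Subsets of $S_\beta$: $E_0=[0,\frac1\beta)\times[0,\frac1\beta)$; $E_1=\{0\le y<\frac1\beta,\ \frac{1}{\beta(\beta-1)}<x+y\le\frac{1}{\beta-1}\}$; $E_2=\{0\le x<\frac1\beta,\ \frac{1}{\beta(\beta-1)}<x+y\le\frac{1}{\beta-1}\}$; $C_{01}=\{x\ge\frac1\beta,\ 0\le y<\frac1\beta,\ x+y\le\frac{1}{\beta(\beta-1)}\}$; $C_{12}=\{x\ge\frac1\beta,\ y\ge\frac1\beta,\ \frac{1}{\beta(\beta-1)}<x+y\le\frac{1}{\beta-1}\}$; $C_{02}=\{0\le x<\frac1\beta,\ y\ge\frac1\beta,\ x+y\le\frac{1}{\beta(\beta-1)}\}$; $C_{012}=\{x\ge\frac1\beta,\ y\ge\frac1\beta,\ x+y\le\frac{1}{\beta(\beta-1)}\}$; $C=C_{01}\cup C_{12}\cup C_{02}$. $\Omega=\{0,1\}^{\mathbb N}$, $\Upsilon=\{0,1,2\}^{\mathbb N}$ with product $\sigma$-algebras and left shifts $\sigma,\sigma'$.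 $K_\beta$ on $\Omega\times\Upsilon\times S_\beta$: $K_\beta(\omega,\upsilon,\vec z)=(\omega,\upsilon,\beta\vec z-\vec q_i)$ if $\vec z\in E_i$; $(\sigma\omega,\upsilon,\beta\vec z-\vec q_i)$ if $\omega_1=0$, $\vec z\in C_{ij}$ ($ij\in\{01,12,02\}$); $(\sigma\omega,\upsilon,\beta\vec z-\vec q_j)$ if $\omega_1=1$, $\vec z\in C_{ij}$; $(\omega,\sigma'\upsilon,\beta\vec z-\vec q_i)$ if $\vec z\in C_{012}$, $\upsilon_1=i$. The digit $d_1(\omega,\upsilon,\vec z)$ is the vector subtracted, $d_n=d_1\circ K_\beta^{n-1}$. Define $\varphi:\Omega\times\Upsilon\times S_\beta\to\Upsilon$ by $\varphi(\omega,\upsilon,\vec z)=(b_1,b_2,\ldots)$ where $d_n(\omega,\upsilon,\vec z)=\vec q_{b_n}$. Let $Z$ be the set of $(\omega,\upsilon,\vec z)$ such that $K_\beta^n(\omega,\upsilon,\vec z)\in\Omega\times\Upsilon\times C$ for infinitely many $n$ and $K_\beta^n(\omega,\upsilon,\vec z)\in\Omega\times\Upsilon\times C_{012}$ for infinitely many $n$. Let $D$ be the set of $(b_1,b_2,\ldots)\in\Upsilon$ such that $\sum_{i\ge1}\vec q_{b_{j+i-1}}\beta^{-i}\in C$ for infinitely many $j$ and $\sum_{i\ge1}\vec q_{b_{j+i-1}}\beta^{-i}\in C_{012}$ for infinitely many $j$. (One has $\varphi(Z)=D$.) *)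

(* Defs.v *)
From HB Require Import structures.
From mathcomp Require Import all_boot all_order all_algebra.
From mathcomp Require Import all_classical all_reals all_analysis.
Set Implicit Arguments. Unset Strict Implicit. Unset Printing Implicit Defensive.
Import Order.TTheory GRing.Theory Num.Theory.
Import numFieldNormedType.Exports.
Local Open Scope classical_set_scope.
Local Open Scope ring_scope.

(* Omega = {0,1}^N  (false = 0, true = 1), Upsilon = {0,1,2}^N;
   sequences are indexed from 0, so omega_1 is [w 0O]. *)
Definition Omega := nat -> bool.
Definition Upsilon := nat -> 'I_3.

Definition state (R : realType) := (Omega * Upsilon * (R * R))%type.

Definition qv (R : realType) (i : 'I_3) : R * R :=
  match val i with 0%N => (0, 0) | 1%N => (1, 0) | _ => (0, 1) end.

Section Regions.
Variables (R : realType) (beta : R).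

Definition Sbeta : set (R * R) :=
  [set z | 0 <= z.1 /\ 0 <= z.2 /\ z.1 + z.2 <= (beta - 1)^-1].

Definition E0 : set (R * R) :=
  [set z | 0 <= z.1 < beta^-1 /\ 0 <= z.2 < beta^-1].
Definition E1 : set (R * R) :=
  [set z | 0 <= z.2 < beta^-1 /\
           (beta * (beta - 1))^-1 < z.1 + z.2 <= (beta - 1)^-1].
Definition E2 : set (R * R) :=
  [set z | 0 <= z.1 < beta^-1 /\
           (beta * (beta - 1))^-1 < z.1 + z.2 <= (beta - 1)^-1].
Definition C01 : set (R * R) :=
  [set z | beta^-1 <= z.1 /\ 0 <= z.2 < beta^-1 /\
           z.1 + z.2 <= (beta * (beta - 1))^-1].
Definition C12 : set (R * R) :=
  [set z | beta^-1 <= z.1 /\ beta^-1 <= z.2 /\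
           (beta * (beta - 1))^-1 < z.1 + z.2 <= (beta - 1)^-1].
Definition C02 : set (R * R) :=
  [set z | 0 <= z.1 < beta^-1 /\ beta^-1 <= z.2 /\
           z.1 + z.2 <= (beta * (beta - 1))^-1].
Definition C012 : set (R * R) :=
  [set z | beta^-1 <= z.1 /\ beta^-1 <= z.2 /\
           z.1 + z.2 <= (beta * (beta - 1))^-1].
Definition Cset : set (R * R) := C01 `|` C12 `|` C02.

Definition Tmap (i : 'I_3) (z : R * R) : R * R :=
  (beta * z.1 - (qv R i).1, beta * z.2 - (qv R i).2).

Definition shiftO (w : Omega) : Omega := fun n => w n.+1.
Definition shiftU (u : Upsilon) : Upsilon := fun n => u n.+1.

Definition i0 : 'I_3 := @Ordinal 3 0 isT.
Definition i1 : 'I_3 := @Ordinal 3 1 isT.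
Definition i2 : 'I_3 := @Ordinal 3 2 isT.

(* one step of K_beta: returns (index b of the digit d_1 = q_b, K_beta x).
   The last branch (points outside S_beta) is irrelevant junk. *)
Definition Kstep (x : state R) : 'I_3 * state R :=
  let: (w, u, z) := x in
  if `[< E0 z >] then (i0, (w, u, Tmap i0 z))
  else if `[< E1 z >] then (i1, (w, u, Tmap i1 z))
  else if `[< E2 z >] then (i2, (w, u, Tmap i2 z))
  else if `[< C01 z >] then
    (let b := if w 0%N then i1 else i0 in (b, (shiftO w, u, Tmap b z)))
  else if `[< C12 z >] then
    (let b := if w 0%N then i2 else i1 in (b, (shiftO w, u, Tmap b z)))
  else if `[< C02 z >] then
    (let b := if w 0%N then i2 else i0 in (b, (shiftO w, u, Tmap b z)))
  else if `[< C012 z >] then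
    (let b := u 0%N in (b, (w, shiftU u, Tmap b z)))
  else (i0, x).

Definition Kbeta (x : state R) : state R := (Kstep x).2.

Definition Kiter (n : nat) (x : state R) : state R := iter n Kbeta x.

(* phi(x) = (b_1, b_2, ...) with d_n(x) = q_{b_n}; index k here is b_{k+1} *)
Definition phi (x : state R) : Upsilon := fun k => (Kstep (Kiter k x)).1.

Definition inf_often (P : nat -> Prop) : Prop :=
  forall N : nat, exists2 n : nat, (N <= n)%N & P n.

Definition Zset : set (state R) :=
  [set x | Sbeta x.2 /\
           inf_often (fun n => Cset (Kiter n x).2) /\
           inf_often (fun n => C012 (Kiter n x).2)].

(* sum_{i>=1} q_{b_{j+i-1}} beta^{-i}, written 0-indexed:
   sum_{i>=0} q_{b (j+i)} beta^{-(i+1)}, coordinatewise *)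
Definition proj_seq (b : Upsilon) (j : nat) : R * R :=
  (limn (series (fun i => (qv R (b (j + i)%N)).1 * beta ^- i.+1)),
   limn (series (fun i => (qv R (b (j + i)%N)).2 * beta ^- i.+1))).

Definition Dset : set Upsilon :=
  [set b | inf_often (fun j => Cset (proj_seq b j)) /\
           inf_often (fun j => C012 (proj_seq b j))].

End Regions.

Definition seq_sigma (K : Type) : set (set (nat -> K)) :=
  <<s [set A | exists (n : nat) (k : K), A = [set w | w n = k]] >>.

Arguments seq_sigma K : clear implicits.

Definition borel2 (R : realType) : set (set (R * R)) :=
  <<s [set A : set (R * R) | open A] >>.

Arguments borel2 R : clear implicits.

(* product sigma-algebra on Omega x Upsilon x R^2; restricted (trace) to
   Omega x Upsilon x S_beta it is the product sigma-algebra there *)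
Definition state_sigma (R : realType) : set (set (state R)) :=
  <<s [set S | exists A B C, [/\ seq_sigma bool A, seq_sigma 'I_3 B,
                           borel2 R C & S = A `*` B `*` C]] >>.

Arguments state_sigma R : clear implicits.

(* measurability of f restricted to Dom (with trace sigma-algebra on Dom);
   the codomain carries the trace of FY on a set containing f(Dom), whose
   measurable sets are traces of FY-sets, so it suffices to test those. *)
Definition trace_measurable (X Y : Type) (FX : set (set X)) (FY : set (set Y))
    (Dom : set X) (f : X -> Y) : Prop :=
  forall B, FY B -> exists2 A, FX A & Dom `&` f @^-1` B = Dom `&` A.

(* Main.v *)
Require Import Defs.
From HB Require Import structures.
From mathcomp Require Import all_boot all_order all_algebra.
From mathcomp Require Import all_classical all_reals all_analysis.
From mathcomp Require Import ring lra zify.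
Import Order.TTheory GRing.Theory Num.Theory.
Import numFieldNormedType.Exports.
Local Open Scope classical_set_scope.
Local Open Scope ring_scope.

Section Sig.
Context {T : Type} (G : set (set T)).
Local Notation S := (<<s G >>).
Lemma s0 : S set0. Proof. exact: sigma_algebra0. Qed.
Lemma sC {A} : S A -> S (~` A).
Proof. by move=> h; rewrite -setTD; exact: sigma_algebraCD. Qed.
Lemma sT : S setT. Proof. by have := sC s0; rewrite setC0. Qed.
Lemma sBU (A : (set T)^nat) : (forall i, S (A i)) -> S (\bigcup_i A i).
Proof. exact: (@sigma_algebra_bigcup _ setT G). Qed.
Lemma sBI (A : (set T)^nat) : (forall i, S (A i)) -> S (\bigcap_i A i).
Proof.
move=> h; rewrite -(setCK (\bigcap_i A i)) setC_bigcap; apply: sC.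
by apply: sBU => i; apply: sC.
Qed.
Lemma sU {A B} : S A -> S B -> S (A `|` B).
Proof.
move=> hA hB; rewrite -bigcup2E; apply: sBU => -[|[|i]] //=; exact: s0.
Qed.
Lemma sI {A B} : S A -> S B -> S (A `&` B).
Proof.
move=> hA hB; rewrite -(setCK (A `&` B)) setCI; apply: sC; apply: sU; exact: sC.
Qed.
Lemma sG {A} : G A -> S A.
Proof. exact: sub_sigma_algebra. Qed.
End Sig.

Lemma gen_preimage {X Y : Type} (GX : set (set X)) (G : set (set Y)) (f : X -> Y) :
  (forall g, G g -> <<s GX >> (f @^-1` g)) ->
  forall B, <<s G >> B -> <<s GX >> (f @^-1` B).
Proof.
move=> hG; apply: smallest_sub => //; split => /=.
- by rewrite preimage_set0; exact: s0.
- by move=> A hA; rewrite setTD preimage_setC; apply: sC.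
- by move=> A hA; rewrite preimage_bigcup; apply: sBU.
Qed.

Set Implicit Arguments. Unset Strict Implicit.

Lemma asbool_iff (P : Prop) (b : bool) : (P <-> b) -> `[< P >] = b.
Proof. by move=> h; apply/asboolP/idP; case: h. Qed.

Section Main.
Context (R : realType) (beta : R) (hb : 1 < beta <= 3/2).
Local Notation d := ((beta - 1)^-1).

Lemma b0 : 0 < beta. Proof. case/andP: hb => h _; lra. Qed.
Lemma bn0 : beta != 0. Proof. by rewrite gt_eqF // b0. Qed.
Lemma b1n0 : beta - 1 != 0. Proof. case/andP: hb => h _; apply/eqP; lra. Qed.
Lemma d0 : 0 < d. Proof. case/andP: hb => h _; rewrite invr_gt0; lra. Qed.
Lemma d2 : 2 <= d.
Proof.
case/andP: hb => h1 h2; have e : d * (beta - 1) = 1 by rewrite mulVf // b1n0.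
have := d0; nra.
Qed.
Lemma ba : beta * beta^-1 = 1. Proof. by rewrite mulfV // bn0. Qed.
Lemma bc : beta * (beta * (beta - 1))^-1 = d.
Proof. have := bn0; have := b1n0 => h1 h2; field; rewrite h1 h2. by []. Qed.
Lemma bd : beta * d = 1 + d.
Proof. have := b1n0 => h1; field. by rewrite h1. Qed.
Lemma ad : (1 + d) * beta^-1 = d.
Proof. have := bn0; have := b1n0 => h1 h2; field. by rewrite h1 h2. Qed.

Definition A (z : R * R) := beta * z.1 < 1.
Definition B (z : R * R) := beta * z.2 < 1.
Definition Cc (z : R * R) := d < beta * z.1 + beta * z.2.

Lemma sc_lt (u v : R) : (u < v) = (beta * u < beta * v).
Proof. by rewrite ltr_pM2l // b0. Qed.
Lemma sc_le (u v : R) : (u <= v) = (beta * u <= beta * v).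
Proof. by rewrite ler_pM2l // b0. Qed.

Lemma SbE z : Sbeta beta z <->
  [/\ 0 <= beta * z.1, 0 <= beta * z.2 & beta * z.1 + beta * z.2 <= 1 + d].
Proof.
rewrite /Sbeta /= (sc_le 0 z.1) (sc_le 0 z.2) (sc_le _ d) mulr0 mulrDr bd.
by split => [[h1 [h2 h3]]|[h1 h2 h3]].
Qed.

Section Atoms.
Variable z : R * R.
Hypothesis hz : Sbeta beta z.
Let hA : (z.1 < beta^-1) = A z. Proof. by rewrite /A (sc_lt z.1) ba. Qed.
Let hB : (z.2 < beta^-1) = B z. Proof. by rewrite /B (sc_lt z.2) ba. Qed.
Let hC : ((beta * (beta - 1))^-1 < z.1 + z.2) = Cc z.
Proof. by rewrite /Cc sc_lt bc mulrDr. Qed.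
Let hA' : (beta^-1 <= z.1) = ~~ A z. Proof. by rewrite leNgt hA. Qed.
Let hB' : (beta^-1 <= z.2) = ~~ B z. Proof. by rewrite leNgt hB. Qed.
Let hC' : (z.1 + z.2 <= (beta * (beta - 1))^-1) = ~~ Cc z.
Proof. by rewrite leNgt hC. Qed.
Let h1 : (0 <= z.1) = true. Proof. by case: hz => ->. Qed.
Let h2 : (0 <= z.2) = true. Proof. by case: hz => _ [->]. Qed.
Let h3 : (z.1 + z.2 <= d) = true. Proof. by case: hz => _ [_ ->]. Qed.

Ltac solv := apply: asbool_iff; case: (A z); case: (B z); case: (Cc z);
  split => //=; intuition.

Lemma E0E : `[< E0 beta z >] = A z && B z.
Proof. rewrite /E0 /= h1 h2 hA hB; solv. Qed.
Lemma E1E : `[< E1 beta z >] = B z && Cc z.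
Proof. rewrite /E1 /= h2 hB hC h3; solv. Qed.
Lemma E2E : `[< E2 beta z >] = A z && Cc z.
Proof. rewrite /E2 /= h1 hA hC h3; solv. Qed.
Lemma C01E : `[< C01 beta z >] = [&& ~~ A z, B z & ~~ Cc z].
Proof. rewrite /C01 /= h2 hA' hB hC'; solv. Qed.
Lemma C12E : `[< C12 beta z >] = [&& ~~ A z, ~~ B z & Cc z].
Proof. rewrite /C12 /= hA' hB' hC h3; solv. Qed.
Lemma C02E : `[< C02 beta z >] = [&& A z, ~~ B z & ~~ Cc z].
Proof. rewrite /C02 /= h1 hA hB' hC'; solv. Qed.
Lemma C012E : `[< C012 beta z >] = [&& ~~ A z, ~~ B z & ~~ Cc z].
Proof. rewrite /C012 /= hA' hB' hC'; solv. Qed.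
End Atoms.
End Main.
Arguments A {R}. Arguments B {R}. Arguments Cc {R}.

Section K.
Context (R : realType) (beta : R) (hb : 1 < beta <= 3/2).
Local Notation d := ((beta - 1)^-1).

Definition isC (z : R * R) := `[< Cset beta z >].
Definition is012 (z : R * R) := `[< C012 beta z >].
Definition upper (z : R * R) := if `[< C01 beta z >] then i1 else i2.
Definition lower (z : R * R) := if `[< C12 beta z >] then i1 else i0.
Definition valid (i : 'I_3) (z : R * R) :=
  [&& (i == i0) ==> ~~ Cc beta z, (i == i1) ==> ~~ A beta z & (i == i2) ==> ~~ B beta z].

Lemma I3P (i : 'I_3) : [\/ i = i0, i = i1 | i = i2].
Proof.
case: i => -[|[|[|m]]] h.
- by constructor 1; apply: val_inj.
- by constructor 2; apply: val_inj.
- by constructor 3; apply: val_inj.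
- by [].
Qed.

Section Z.
Variable z : R * R.
Hypothesis hz : Sbeta beta z.

Lemma isCE : isC z = [|| [&& ~~ A beta z, B beta z & ~~ Cc beta z],
    [&& ~~ A beta z, ~~ B beta z & Cc beta z] | [&& A beta z, ~~ B beta z & ~~ Cc beta z]].
Proof. by rewrite /isC /Cset /setU /= !asbool_or (C01E hb hz) (C12E hb hz) (C02E hb hz) -orbA. Qed.

Lemma notABC : ~~ [&& A beta z, B beta z & Cc beta z].
Proof.
apply/negP => /and3P []; rewrite /A /B /Cc => h1 h2 h3.
have := d2 hb; lra.
Qed.

Ltac unf := rewrite /Kstep /= ?(E0E hb hz) ?(E1E hb hz) ?(E2E hb hz) ?(C01E hb hz)
  ?(C12E hb hz) ?(C02E hb hz) ?(C012E hb) ?isCE /is012 ?(C012E hb)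
  /upper /lower ?(C01E hb hz) ?(C12E hb hz) /valid;
  have := notABC; case: (A beta z); case: (B beta z); case: (Cc beta z) => //= _.

Lemma KS1 w u : (Kstep beta (w, u, z)).2 =
  (if isC z then shiftO w else w, if is012 z then shiftU u else u,
   Tmap beta (Kstep beta (w, u, z)).1 z).
Proof. unf; by case: (w 0%N). Qed.

Lemma KS2 w u : isC z -> (Kstep beta (w, u, z)).1 = if w 0%N then upper z else lower z.
Proof. unf; by case: (w 0%N). Qed.

Lemma KS3 w u : is012 z -> (Kstep beta (w, u, z)).1 = u 0%N.
Proof. by unf. Qed.

Lemma KSvalid w u : valid (Kstep beta (w, u, z)).1 z.
Proof. unf; try case: (w 0%N) => //; by case: (I3P (u 0%N)) => ->. Qed.

Lemma KSV w u i : valid i z -> (isC z -> w 0%N = (i == upper z)) ->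
  (is012 z -> u 0%N = i) -> (Kstep beta (w, u, z)).1 = i.
Proof.
case: (I3P i) => ->; unf => // _ h1 h2; rewrite ?h1 ?h2 //.
Qed.

Lemma upper_lower : isC z -> upper z != lower z.
Proof. by unf. Qed.

Lemma Tmap_S i : valid i z -> Sbeta beta (Tmap beta i z).
Proof.
move: (hz) => /(SbE hb) [h1 h2 h3].
rewrite /valid /Tmap /Sbeta /Cc /A /B /=.
case: (I3P i) => -> /=; rewrite /qv /= ?andbT -?leNgt => h; split; try split; lra.
Qed.
End Z.
End K.
Arguments isC {R}. Arguments is012 {R}. Arguments upper {R}. Arguments lower {R}. Arguments valid {R}.

Section PS.
Context (R : realType) (beta : R) (hb : 1 < beta <= 3/2).
Local Notation d := ((beta - 1)^-1).

Definition sq (f : 'I_3 -> R) (b : Upsilon) (j : nat) : R^nat :=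
  series (fun i => f (b (j + i)%N) * beta ^- i.+1).

Lemma sq0 f b j : sq f b j 0 = 0. Proof. by rewrite /sq /series /= big_geq. Qed.

Lemma sq_rec f b j m : sq f b j m.+1 = f (b j) * beta^-1 + beta^-1 * sq f b j.+1 m.
Proof.
rewrite /sq /series /= big_nat_recl // addn0 expr1 mulr_sumr; congr (_ + _).
by apply: eq_bigr => i _; rewrite addnS -addSn exprS invfM mulrCA.
Qed.

Lemma fin_id (pr : R * R -> R) (f : 'I_3 -> R) b (y : nat -> R * R) :
  (forall n, beta * pr (y n) - f (b n) = pr (y n.+1)) ->
  forall m j, pr (y j) = sq f b j m + beta ^- m * pr (y (j + m)%N).
Proof.
move=> hy; elim=> [|m IH] j.
  by rewrite sq0 expr0 invr1 mul1r addn0 add0r.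
have e : pr (y j) = f (b j) * beta^-1 + beta^-1 * pr (y j.+1).
  by rewrite -(hy j); have := bn0 hb => h; field; rewrite h.
rewrite e (IH j.+1) sq_rec -addSnnS exprS invfM; ring.
Qed.

Lemma geo_small e : 0 < e -> exists N, forall n, (N <= n)%N -> beta ^- n * d < e.
Proof.
move=> e0.
have h : `|beta^-1| < 1.
  rewrite ger0_norm ?invr_ge0 ?ltW ?(b0 hb) // invf_lt1 ?(b0 hb) //.
  by case/andP: hb.
have ed : 0 < e / d by rewrite divr_gt0 // (d0 hb).
have [N _ hN] := cvgr0_norm_lt _ (cvg_expr h) _ ed.
exists N => n hn; have := hN n hn; rewrite /= ger0_norm ?exprn_ge0 ?invr_ge0 ?ltW ?(b0 hb) //.
by rewrite exprVn ltr_pdivlMr // (d0 hb).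
Qed.

Lemma lim_of pr f b (y : nat -> R * R) :
  (forall n, beta * pr (y n) - f (b n) = pr (y n.+1)) ->
  (forall n, 0 <= pr (y n) <= d) -> forall j, limn (sq f b j) = pr (y j).
Proof.
move=> hy hyb j; apply: cvg_lim => //; apply/cvgrPdist_lt => e e0.
have [N hN] := geo_small e0; exists N => // m /= hm.
rewrite (fin_id hy m j) addrAC subrr add0r.
have /andP [p1 p2] := hyb (j + m)%N.
have hp : 0 <= beta ^- m by rewrite invr_ge0 exprn_ge0 // ltW // (b0 hb).
rewrite ger0_norm ?mulr_ge0 //.
by apply: le_lt_trans (hN m hm); rewrite ler_wpM2l.
Qed.

Section F.
Variable f : 'I_3 -> R.
Hypothesis f0 : forall i, 0 <= f i.

Lemma sq_ge0 b j m : 0 <= sq f b j m.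
Proof.
rewrite /sq /series /=; apply: sumr_ge0 => i _; apply: mulr_ge0 => //.
by rewrite invr_ge0 exprn_ge0 // ltW // (b0 hb).
Qed.

Lemma sq_nd b j : nondecreasing_seq (sq f b j).
Proof.
apply/nondecreasing_seqP => n; rewrite /sq seriesSr lerDl mulr_ge0 //.
by rewrite invr_ge0 exprn_ge0 // ltW // (b0 hb).
Qed.
End F.

Lemma sq_bound f1 f2 b j m : (forall i, 0 <= f1 i) -> (forall i, 0 <= f2 i) ->
  (forall i, f1 i + f2 i <= 1) ->
  sq f1 b j m + sq f2 b j m <= d - d * beta ^- m.
Proof.
move=> p1 p2 p12; elim: m => [|m IH].
  by rewrite !sq0 expr0 invr1 mulr1 subrr addr0.
rewrite /sq !seriesSr -/(sq f1 b j m) -/(sq f2 b j m).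
set t := beta ^- m.+1.
have ht : 0 <= t by rewrite invr_ge0 exprn_ge0 // ltW // (b0 hb).
have hT : f1 (b (j + m)%N) * t + f2 (b (j + m)%N) * t <= t.
  by rewrite -mulrDl ler_piMl.
have hE : d * beta ^- m = t + d * t.
  by rewrite /t exprS invfM -{1}(ad hb) -mulrA; ring.
lra.
Qed.
End PS.

Section PS2.
Context (R : realType) (beta : R) (hb : 1 < beta <= 3/2).
Local Notation d := ((beta - 1)^-1).

Definition f1 (i : 'I_3) : R := (qv R i).1.
Definition f2 (i : 'I_3) : R := (qv R i).2.
Lemma f1_ge0 i : 0 <= f1 i. Proof. by rewrite /f1 /qv; case: (I3P i) => -> /=. Qed.
Lemma f2_ge0 i : 0 <= f2 i. Proof. by rewrite /f2 /qv; case: (I3P i) => -> /=. Qed.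
Lemma f12 i : f1 i + f2 i <= 1.
Proof. by rewrite /f1 /f2 /qv; case: (I3P i) => -> /=; rewrite ?addr0 ?add0r. Qed.

Lemma proj_seqE b j :
  proj_seq beta b j = (limn (sq beta f1 b j), limn (sq beta f2 b j)).
Proof. by []. Qed.

Lemma dbeta_ge0 m : 0 <= d * beta ^- m.
Proof.
apply: mulr_ge0; first exact: ltW (d0 hb).
by rewrite invr_ge0 exprn_ge0 // ltW // (b0 hb).
Qed.

Lemma sq1_le b j m : sq beta f1 b j m <= d.
Proof.
have := sq_bound hb b j m f1_ge0 f2_ge0 f12; have := sq_ge0 hb f2_ge0 b j m.
have := dbeta_ge0 m; lra.
Qed.
Lemma sq2_le b j m : sq beta f2 b j m <= d.
Proof.
have := sq_bound hb b j m f1_ge0 f2_ge0 f12; have := sq_ge0 hb f1_ge0 b j m.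
have := dbeta_ge0 m; lra.
Qed.

Lemma sq_cvg f b j : (forall i, 0 <= f i) -> (forall m, sq beta f b j m <= d) ->
  cvgn (sq beta f b j).
Proof.
move=> h0 hle; apply: nondecreasing_is_cvgn; first exact: sq_nd.
by exists d => _ [m _ <-].
Qed.

Lemma sq1_cvg b j : cvgn (sq beta f1 b j).
Proof. exact: (sq_cvg f1_ge0 (sq1_le b j)). Qed.
Lemma sq2_cvg b j : cvgn (sq beta f2 b j).
Proof. exact: (sq_cvg f2_ge0 (sq2_le b j)). Qed.

Lemma L_shift f b j : cvgn (sq beta f b j) -> cvgn (sq beta f b j.+1) ->
  beta * limn (sq beta f b j) - f (b j) = limn (sq beta f b j.+1).
Proof.
move=> c1 c2.
have h : (fun m => sq beta f b j m.+1) @ \oo -->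
   f (b j) * beta^-1 + beta^-1 * limn (sq beta f b j.+1).
  rewrite (_ : (fun m => _) = fun m => f (b j) * beta^-1 + beta^-1 * sq beta f b j.+1 m);
    last by apply: funext => m; rewrite sq_rec.
  apply: cvgD; first exact: cvg_cst.
  exact: cvgMl_tmp.
have e1 := cvg_lim _ h.
have h2 : (fun m => sq beta f b j m.+1) @ \oo --> limn (sq beta f b j).
  by rewrite (cvg_shiftS (sq beta f b j)).
have e2 := cvg_lim _ h2.
rewrite -e2 // e1 //; have := bn0 hb => hn; field; by rewrite hn.
Qed.

Lemma PS b j : Sbeta beta (proj_seq beta b j) /\
  Tmap beta (b j) (proj_seq beta b j) = proj_seq beta b j.+1.
Proof.
rewrite !proj_seqE; split.
  split; [|split] => /=.
  - apply: (limr_ge (@sq1_cvg b j)).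
    by exists 0%N => // m _; apply: sq_ge0 => //; exact: f1_ge0.
  - apply: (limr_ge (@sq2_cvg b j)).
    by exists 0%N => // m _; apply: sq_ge0 => //; exact: f2_ge0.
  - rewrite -limD; [|exact: sq1_cvg|exact: sq2_cvg].
    have hc : cvgn (sq beta f1 b j + sq beta f2 b j).
      by apply: is_cvgD; [exact: (@sq1_cvg b j)|exact: (@sq2_cvg b j)].
    apply: (limr_le hc).
    exists 0%N => // m _ /=.
    change (sq beta f1 b j m + sq beta f2 b j m <= d).
    have := sq_bound hb b j m f1_ge0 f2_ge0 f12; have := dbeta_ge0 m; lra.
rewrite /Tmap /=; congr (_, _).
- by apply: (L_shift (@sq1_cvg b j) (@sq1_cvg b j.+1)).
- by apply: (L_shift (@sq2_cvg b j) (@sq2_cvg b j.+1)).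
Qed.

Lemma PS_unique b (y : nat -> R * R) : (forall n, Sbeta beta (y n)) ->
  (forall n, Tmap beta (b n) (y n) = y n.+1) -> forall j, y j = proj_seq beta b j.
Proof.
move=> hS hT j; rewrite proj_seqE; apply: injective_projections => /=; apply/esym.
- apply: (@lim_of _ _ hb fst); first by move=> n; rewrite -(hT n).
  move=> n; have [h1 [h2 h3]] := hS n; apply/andP; split => //; lra.
- apply: (@lim_of _ _ hb snd); first by move=> n; rewrite -(hT n).
  move=> n; have [h1 [h2 h3]] := hS n; apply/andP; split => //; lra.
Qed.

Lemma PS_tail b j m :
  0 <= (proj_seq beta b j).1 - sq beta f1 b j m <= beta ^- m * d /\
  0 <= (proj_seq beta b j).2 - sq beta f2 b j m <= beta ^- m * d.
Proof.
have hT n : Tmap beta (b n) (proj_seq beta b n) = proj_seq beta b n.+1 by case: (PS b n).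
have hp : 0 <= beta ^- m by rewrite invr_ge0 exprn_ge0 // ltW // (b0 hb).
have [[h1 [h2 h3]] _] := PS b (j + m)%N.
have e1 := @fin_id _ _ hb fst f1 b (proj_seq beta b) (fun n => f_equal fst (hT n)) m j.
have e2 := @fin_id _ _ hb snd f2 b (proj_seq beta b) (fun n => f_equal snd (hT n)) m j.
split.
- rewrite e1 addrAC subrr add0r; apply/andP; split; first by rewrite mulr_ge0.
  by rewrite ler_wpM2l //; lra.
- rewrite e2 addrAC subrr add0r; apply/andP; split; first by rewrite mulr_ge0.
  by rewrite ler_wpM2l //; lra.
Qed.
End PS2.

Fixpoint cnt (f : nat -> bool) (j : nat) : nat :=
  if j is j'.+1 then (cnt f j' + f j')%N else 0%N.

Lemma cnt_mono (f : nat -> bool) i j : (i <= j)%N -> (cnt f i <= cnt f j)%N.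
Proof.
elim: j => [|j IH] hij; first by move: hij; rewrite leqn0 => /eqP ->.
rewrite leq_eqVlt in hij; case/orP: hij => [/eqP -> //|hij].
have := IH hij; rewrite /=; lia.
Qed.

Lemma cnt_uniq (f : nat -> bool) i j : f i -> f j -> cnt f i = cnt f j -> i = j.
Proof.
wlog: i j / (i <= j)%N.
  move=> h fi fj e; case: (leqP i j) => hij; first exact: h.
  by apply/esym/h => //; apply: ltnW.
move=> hij fi fj e; rewrite leq_eqVlt in hij; case/orP: hij => [/eqP //|hij].
have := cnt_mono f hij; rewrite /= fi -e; lia.
Qed.

Lemma cnt_unb (f : nat -> bool) : inf_often (fun n => f n) -> forall k, exists n, (k <= cnt f n)%N.
Proof.
move=> hf; elim=> [|k [n hn]]; first by exists 0%N.
have [m hm fm] := hf n; exists m.+1 => /=; rewrite fm.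
have := cnt_mono f hm; lia.
Qed.

Lemma cnt_ex (f : nat -> bool) : inf_often (fun n => f n) -> forall k, exists j, cnt f j = k /\ f j.
Proof.
move=> hf k; have hex : exists n, (k < cnt f n)%N by apply: cnt_unb.
case: (ex_minnP hex) => n0 hn0 hmin.
case: n0 hn0 hmin => [//|j] /= hj hmin.
have hj' : (cnt f j <= k)%N.
  by rewrite leqNgt; apply/negP => /hmin; lia.
exists j; move: hj hj'; case: (f j) => /=; lia.
Qed.

Section Dyn.
Context (R : realType) (beta : R) (hb : 1 < beta <= 3/2).
Local Notation d := ((beta - 1)^-1).

Lemma valid_of_S i z : Sbeta beta (Tmap beta i z) -> valid beta i z.
Proof.
rewrite /Sbeta /Tmap /valid /Cc /A /B /=.
by case: (I3P i) => -> /=; rewrite /qv /= => -[h1 [h2 h3]]; rewrite ?andbT -?leNgt; lra.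
Qed.

Lemma Kiter_S (x : state R) n : Kiter beta n.+1 x = Kbeta beta (Kiter beta n x).
Proof. by []. Qed.

Lemma orbit_S (x : state R) : Sbeta beta x.2 -> forall n,
  Sbeta beta (Kiter beta n x).2 /\
  Tmap beta (phi beta x n) (Kiter beta n x).2 = (Kiter beta n.+1 x).2.
Proof.
move=> hx; elim=> [|n [IH _]].
  move: hx; rewrite /phi /Kiter /Kbeta /=; case: x => -[w u] z /= hz.
  by split => //; rewrite (KS1 hb hz).
have h2 : forall m, Sbeta beta (Kiter beta m x).2 ->
  Tmap beta (phi beta x m) (Kiter beta m x).2 = (Kiter beta m.+1 x).2 /\
  Sbeta beta (Kiter beta m.+1 x).2.
  move=> m; rewrite Kiter_S /phi /Kbeta; case: (Kiter beta m x) => -[w u] z /= hz.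
  rewrite (KS1 hb hz) /=; split => //; apply: (Tmap_S hb hz); exact: KSvalid.
have [_ h3] := h2 n IH; split => //.
by have [] := h2 n.+1 h3.
Qed.

Lemma expand (x : state R) : Sbeta beta x.2 -> forall j,
  (Kiter beta j x).2 = proj_seq beta (phi beta x) j.
Proof.
move=> hx; apply: (PS_unique hb).
- by move=> n; case: (orbit_S hx n).
- by move=> n; case: (orbit_S hx n).
Qed.

Lemma orbit (x : state R) : Sbeta beta x.2 -> forall j,
  (Kiter beta j x).1.1 = (fun n => x.1.1 (n + cnt (fun i => isC beta (Kiter beta i x).2) j)%N) /\
  (Kiter beta j x).1.2 = (fun n => x.1.2 (n + cnt (fun i => is012 beta (Kiter beta i x).2) j)%N).
Proof.
move=> hx; elim=> [|j [IH1 IH2]].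
  by split; apply: funext => n; rewrite addn0.
have [hS _] := orbit_S hx j.
rewrite Kiter_S /=; move: IH1 IH2 hS; rewrite /Kbeta.
case E: (Kiter beta j x) => [[w u] z] h1 h2 hz; rewrite (KS1 hb hz) /=.
move: h1 h2 => /= -> ->.
split; apply: funext => n.
- by case: (isC beta z); rewrite /shiftO /=; congr (x.1.1 _); lia.
- by case: (is012 beta z); rewrite /shiftU /=; congr (x.1.2 _); lia.
Qed.

Definition pz (b : Upsilon) (j : nat) := proj_seq beta b j.
Definition fC (b : Upsilon) := fun j => isC beta (pz b j).
Definition f012 (b : Upsilon) := fun j => is012 beta (pz b j).
Definition wpsi (b : Upsilon) : Omega := fun k =>
  `[< exists j, [/\ cnt (fC b) j = k, fC b j & b j = upper beta (pz b j)] >].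
Definition upsi (b : Upsilon) : Upsilon := fun k =>
  if `[< exists j, [/\ cnt (f012 b) j = k, f012 b j & b j = i1] >] then i1
  else if `[< exists j, [/\ cnt (f012 b) j = k, f012 b j & b j = i2] >] then i2
  else i0.
Definition psi (b : Upsilon) : state R := (wpsi b, upsi b, pz b 0).

Lemma wpsi_at b j : fC b j -> wpsi b (cnt (fC b) j) = (b j == upper beta (pz b j)).
Proof.
move=> hj; case: eqP => h.
  by apply/asboolP; exists j.
apply/asboolP => -[j' [e hj' h']].
by have ejj := cnt_uniq hj' hj e; subst j'.
Qed.

Lemma upsi_at b j : f012 b j -> upsi b (cnt (f012 b) j) = b j.
Proof.
move=> hj; rewrite /upsi.
have F k : b j != k -> `[< exists j', [/\ cnt (f012 b) j' = cnt (f012 b) j, f012 b j' & b j' = k] >] = false.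
  move=> /eqP hk; apply/asboolP => -[j' [e hj' h']].
  by have ejj := cnt_uniq hj' hj e; subst j'.
case: (I3P (b j)) => E.
- by rewrite !F // E.
- by rewrite asboolT //; exists j.
- by rewrite F ?E // asboolT //; exists j.
Qed.

Lemma psi_orbit b : forall j, Kiter beta j (psi b) =
  ((fun n => wpsi b (n + cnt (fC b) j)%N), (fun n => upsi b (n + cnt (f012 b) j)%N), pz b j).
Proof.
elim=> [|j IH].
  by rewrite /= /psi; congr (_, _, _); apply: funext => n; rewrite addn0.
have [hS hT] := PS hb b j.
have dig : (Kstep beta ((fun n => wpsi b (n + cnt (fC b) j)%N),
     (fun n => upsi b (n + cnt (f012 b) j)%N), pz b j)).1 = b j.
  apply: (KSV hb hS).
  - by apply: valid_of_S; rewrite /pz hT; case: (PS hb b j.+1).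
  - by move=> hC; rewrite add0n wpsi_at.
  - by move=> h0; rewrite add0n upsi_at.
rewrite Kiter_S IH /Kbeta (KS1 hb hS) dig /pz hT /=.
congr (_, _, _); apply: funext => n.
- rewrite /fC /pz; case: (isC beta (proj_seq beta b j)); rewrite /shiftO /=;
  congr (wpsi b _); lia.
- rewrite /f012 /pz; case: (is012 beta (proj_seq beta b j)); rewrite /shiftU /=;
  congr (upsi b _); lia.
Qed.

Lemma phi_psi b : phi beta (psi b) = b.
Proof.
apply: funext => j; rewrite /phi psi_orbit.
have [hS hT] := PS hb b j.
apply: (KSV hb hS).
- by apply: valid_of_S; rewrite hT; case: (PS hb b j.+1).
- by move=> hC; rewrite add0n wpsi_at.
- by move=> h0; rewrite add0n upsi_at.
Qed.

Lemma psi_Z b : Dset beta b -> Zset beta (psi b).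
Proof.
move=> [h1 h2]; split; first by case: (PS hb b 0).
split.
- move=> N; have [n hn hC] := h1 N; exists n => //.
  by rewrite psi_orbit.
- move=> N; have [n hn hC] := h2 N; exists n => //.
  by rewrite psi_orbit.
Qed.

Lemma phi_D x : Zset beta x -> Dset beta (phi beta x).
Proof.
move=> [hx [h1 h2]]; split.
- move=> N; have [n hn hC] := h1 N; exists n => //; by rewrite -expand.
- move=> N; have [n hn hC] := h2 N; exists n => //; by rewrite -expand.
Qed.

Lemma psi_phi x : Zset beta x -> psi (phi beta x) = x.
Proof.
move=> [hx [h1 h2]].
set b := phi beta x.
have eC : fC b = (fun i => isC beta (Kiter beta i x).2).
  by apply: funext => i; rewrite /fC /pz expand.
have e012 : f012 b = (fun i => is012 beta (Kiter beta i x).2).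
  by apply: funext => i; rewrite /f012 /pz expand.
have iC : inf_often (fun n => fC b n).
  move=> N; have [n hn hC] := h1 N; exists n => //; rewrite eC; exact: asboolT.
have i012 : inf_often (fun n => f012 b n).
  move=> N; have [n hn hC] := h2 N; exists n => //; rewrite e012; exact: asboolT.
rewrite /psi; apply: injective_projections; [apply: injective_projections|] => /=.
- apply: funext => k; have [j [ej fj]] := cnt_ex iC k.
  rewrite -ej wpsi_at //.
  have [hO1 _] := orbit hx j.
  have hCj : isC beta (Kiter beta j x).2 by move: fj; rewrite eC.
  have : b j = (Kstep beta (Kiter beta j x)).1 by [].
  have hS := (orbit_S hx j).1.
  have ep : pz b j = (Kiter beta j x).2 by rewrite /pz expand.
  rewrite ep; move: hO1 hS hCj; case: (Kiter beta j x) => -[w' u'] z' /= -> hS hCj.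
  rewrite (KS2 hb hS) // add0n -eC => ->.
  case: (x.1.1 (cnt (fC b) j)); first by rewrite eqxx.
  by apply/negbTE; rewrite eq_sym; apply: upper_lower.
- apply: funext => k; have [j [ej fj]] := cnt_ex i012 k.
  rewrite -ej upsi_at //.
  have [_ hO2] := orbit hx j.
  have hCj : is012 beta (Kiter beta j x).2 by move: fj; rewrite e012.
  have : b j = (Kstep beta (Kiter beta j x)).1 by [].
  have hS := (orbit_S hx j).1.
  move: hO2 hS hCj; case: (Kiter beta j x) => -[w' u'] z' /= -> hS hCj.
  by rewrite (KS3 hb hS) // add0n -e012 => ->.
- by rewrite /pz -expand.
Qed.
End Dyn.

Section Top.
Context (R : realType).
Lemma ballR (x y e : R) : ball x e y <-> `|x - y| < e.
Proof. by rewrite -ball_normE. Qed.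
Lemma openP2 (U : set (R*R)) : open U <-> forall p, U p -> exists2 e : R, 0 < e &
  forall q, `|p.1 - q.1| < e -> `|p.2 - q.2| < e -> U q.
Proof.
rewrite openE; split.
- move=> h p /h /nbhs_ballP [e e0 he]; exists e => // q h1 h2; apply: he.
  by split; apply/ballR.
- move=> h p /h [e e0 he]; apply/nbhs_ballP; exists e => // q [h1 h2].
  by apply: he; apply/ballR.
Qed.

Lemma open_lip (g : R * R -> R) :
  (forall p q e, `|p.1 - q.1| < e -> `|p.2 - q.2| < e -> `|g p - g q| < 2 * e) ->
  forall c, open [set z | g z < c] /\ open [set z | c < g z].
Proof.
move=> hg c; split; apply/openP2 => p /= hp.
- exists ((c - g p) / 2); first by rewrite divr_gt0 // subr_gt0.
  move=> q h1 h2; have := hg p q _ h1 h2; rewrite ltr_norml; lra.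
- exists ((g p - c) / 2); first by rewrite divr_gt0 // subr_gt0.
  move=> q h1 h2; have := hg p q _ h1 h2; rewrite ltr_norml; lra.
Qed.

Lemma lip_fst (p q : R * R) (e : R) : `|p.1 - q.1| < e -> `|p.2 - q.2| < e -> `|p.1 - q.1| < 2 * e.
Proof. move=> h1 h2; have := normr_ge0 (p.1 - q.1); lra. Qed.
Lemma lip_snd (p q : R * R) (e : R) : `|p.1 - q.1| < e -> `|p.2 - q.2| < e -> `|p.2 - q.2| < 2 * e.
Proof. move=> h1 h2; have := normr_ge0 (p.2 - q.2); lra. Qed.
Lemma lip_sum (p q : R * R) (e : R) : `|p.1 - q.1| < e -> `|p.2 - q.2| < e ->
  `|(p.1 + p.2) - (q.1 + q.2)| < 2 * e.
Proof.
move=> h1 h2; have := ler_normD (p.1 - q.1) (p.2 - q.2).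
have -> : p.1 - q.1 + (p.2 - q.2) = p.1 + p.2 - (q.1 + q.2) by ring.
lra.
Qed.

Local Notation B2 := (borel2 R).

Lemma Bo U : open U -> B2 U. Proof. by move=> h; apply: sG. Qed.

Lemma B_lt (g : R * R -> R) c :
  (forall p q e, `|p.1 - q.1| < e -> `|p.2 - q.2| < e -> `|g p - g q| < 2 * e) ->
  B2 [set z | g z < c].
Proof. by move=> h; apply: Bo; case: (open_lip h c). Qed.
Lemma B_gt (g : R * R -> R) c :
  (forall p q e, `|p.1 - q.1| < e -> `|p.2 - q.2| < e -> `|g p - g q| < 2 * e) ->
  B2 [set z | c < g z].
Proof. by move=> h; apply: Bo; case: (open_lip h c). Qed.
Lemma B_le (g : R * R -> R) c :
  (forall p q e, `|p.1 - q.1| < e -> `|p.2 - q.2| < e -> `|g p - g q| < 2 * e) ->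
  B2 [set z | g z <= c].
Proof.
move=> h; have -> : [set z | g z <= c] = ~` [set z | c < g z].
  by apply/seteqP; split => z /=; rewrite leNgt => /negP.
by apply: sC; apply: B_gt.
Qed.
Lemma B_ge (g : R * R -> R) c :
  (forall p q e, `|p.1 - q.1| < e -> `|p.2 - q.2| < e -> `|g p - g q| < 2 * e) ->
  B2 [set z | c <= g z].
Proof.
move=> h; have -> : [set z | c <= g z] = ~` [set z | g z < c].
  by apply/seteqP; split => z /=; rewrite leNgt => /negP.
by apply: sC; apply: B_lt.
Qed.

Lemma Band (u v : R * R -> bool) : B2 [set z | u z] -> B2 [set z | v z] ->
  B2 [set z | u z && v z].
Proof.
move=> hu hv; have -> : [set z | u z && v z] = [set z | u z] `&` [set z | v z].
  by apply/seteqP; split => z /=; [move/andP|move=> [-> ->]].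
exact: sI.
Qed.
End Top.

Section Reg.
Context (R : realType) (beta : R) (hb : 1 < beta <= 3/2).
Local Notation B2 := (borel2 R).

Ltac bt := first [ (apply: (@B_lt _ fst); exact: lip_fst)
  | (apply: (@B_lt _ snd); exact: lip_snd)
  | (apply: (@B_lt _ (fun z : R * R => z.1 + z.2)); exact: lip_sum)
  | (apply: (@B_gt _ fst); exact: lip_fst)
  | (apply: (@B_gt _ snd); exact: lip_snd)
  | (apply: (@B_gt _ (fun z : R * R => z.1 + z.2)); exact: lip_sum)
  | (apply: (@B_le _ fst); exact: lip_fst)
  | (apply: (@B_le _ snd); exact: lip_snd)
  | (apply: (@B_le _ (fun z : R * R => z.1 + z.2)); exact: lip_sum)
  | (apply: (@B_ge _ fst); exact: lip_fst)
  | (apply: (@B_ge _ snd); exact: lip_snd)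
  | (apply: (@B_ge _ (fun z : R * R => z.1 + z.2)); exact: lip_sum) ].
Ltac reg := repeat first [ apply: sI | apply: Band | bt ].

Lemma BE0 : B2 (E0 beta). Proof. rewrite /E0; reg. Qed.
Lemma BE1 : B2 (E1 beta). Proof. rewrite /E1; reg. Qed.
Lemma BE2 : B2 (E2 beta). Proof. rewrite /E2; reg. Qed.
Lemma BC01 : B2 (C01 beta). Proof. rewrite /C01; reg. Qed.
Lemma BC12 : B2 (C12 beta). Proof. rewrite /C12; reg. Qed.
Lemma BC02 : B2 (C02 beta). Proof. rewrite /C02; reg. Qed.
Lemma BC012 : B2 (C012 beta). Proof. rewrite /C012; reg. Qed.
Lemma BCset : B2 (Cset beta).
Proof. rewrite /Cset; apply: sU; [apply: sU|]; [exact: BC01|exact: BC12|exact: BC02]. Qed.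
End Reg.

Section Meas.
Context (R : realType) (beta : R) (hb : 1 < beta <= 3/2).
Local Notation B2 := (borel2 R).
Local Notation SS := (state_sigma R).

Lemma seqT (K : Type) : seq_sigma K setT. Proof. exact: sT. Qed.

Lemma cyl (K : Type) n (k : K) : seq_sigma K [set w | w n = k].
Proof. by apply: sG; exists n, k. Qed.

Lemma SS_rect A B C : seq_sigma bool A -> seq_sigma 'I_3 B -> B2 C -> SS (A `*` B `*` C).
Proof. by move=> hA hB hC; apply: sG; exists A, B, C. Qed.

Lemma SS_z C : B2 C -> SS [set x | C x.2].
Proof.
move=> hC; have -> : [set x : state R | C x.2] = setT `*` setT `*` C.
  by apply/seteqP; split => x /=; [move=> h; split|case].
by apply: SS_rect => //; apply: seqT.
Qed.

Lemma SS_w0 (t : bool) : SS [set x : state R | x.1.1 0%N = t].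
Proof.
have -> : [set x : state R | x.1.1 0%N = t] = [set w | w 0%N = t] `*` setT `*` setT.
  by apply/seteqP; split => x /=; [move=> h|case => -[]].
apply: SS_rect; [exact: cyl|exact: seqT|exact: sT].
Qed.

Lemma SS_u0 (k : 'I_3) : SS [set x : state R | x.1.2 0%N = k].
Proof.
have -> : [set x : state R | x.1.2 0%N = k] = setT `*` [set w | w 0%N = k] `*` setT.
  by apply/seteqP; split => x /=; [move=> h|case => -[]].
apply: SS_rect; [exact: seqT|exact: cyl|exact: sT].
Qed.

Lemma SS_map (a : Omega -> Omega) (bb : Upsilon -> Upsilon) (c : R * R -> R * R) :
  (forall A, seq_sigma bool A -> seq_sigma bool (a @^-1` A)) ->
  (forall B, seq_sigma 'I_3 B -> seq_sigma 'I_3 (bb @^-1` B)) ->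
  (forall C, B2 C -> B2 (c @^-1` C)) ->
  forall S, SS S -> SS ((fun x : state R => (a x.1.1, bb x.1.2, c x.2)) @^-1` S).
Proof.
move=> hma hmb hmc; rewrite /state_sigma; apply: gen_preimage => _ [A [B [C [hA hB hC ->]]]].
by apply: (SS_rect (A := a @^-1` A) (B := bb @^-1` B) (C := c @^-1` C)); [apply: hma|apply: hmb|apply: hmc].
Qed.

Lemma id_meas (T : Type) (G : set (set T)) A : <<s G >> A -> <<s G >> (id @^-1` A).
Proof. by []. Qed.

Lemma shiftO_meas A : seq_sigma bool A -> seq_sigma bool (shiftO @^-1` A).
Proof. by rewrite /seq_sigma; apply: gen_preimage => _ [n [k ->]]; apply: (cyl n.+1 k). Qed.
Lemma shiftU_meas A : seq_sigma 'I_3 A -> seq_sigma 'I_3 (shiftU @^-1` A).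
Proof. by rewrite /seq_sigma; apply: gen_preimage => _ [n [k ->]]; apply: (cyl n.+1 k). Qed.

Lemma Tmap_meas i C : B2 C -> B2 (Tmap beta i @^-1` C).
Proof.
rewrite /borel2; apply: gen_preimage => U /openP2 hU; apply: sG; apply/openP2 => p /hU [e e0 he].
have b0 : 0 < beta by case/andP: hb => h _; lra.
exists (e / beta); first by rewrite divr_gt0.
move=> q h1 h2; apply: he; rewrite /Tmap /=.
- rewrite (_ : _ - _ = beta * (p.1 - q.1)); last by ring.
  by rewrite normrM gtr0_norm // -ltr_pdivlMl // mulrC.
- rewrite (_ : _ - _ = beta * (p.2 - q.2)); last by ring.
  by rewrite normrM gtr0_norm // -ltr_pdivlMl // mulrC.
Qed.

Definition goodF (F : state R -> 'I_3 * state R) :=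
  (forall k, SS [set x | (F x).1 = k]) /\ (forall S, SS S -> SS [set x | S (F x).2]).

Lemma SS_if (c : state R -> bool) (P Q : set (state R)) :
  SS [set x | c x] -> SS P -> SS Q -> SS [set x | if c x then P x else Q x].
Proof.
move=> hc hP hQ.
have -> : [set x | if c x then P x else Q x] =
  ([set x | c x] `&` P) `|` (~` [set x | c x] `&` Q).
  apply/seteqP; split => x /=; case: (c x) => /=.
  - by move=> h; left.
  - by move=> h; right.
  - by case => -[].
  - by case => -[].
by apply: sU; apply: sI => //; apply: sC.
Qed.

Lemma good_if (c : state R -> bool) F G : SS [set x | c x] -> goodF F -> goodF G ->
  goodF (fun x => if c x then F x else G x).
Proof.
move=> hc [F1 F2] [G1 G2]; split.
- move=> k; have -> : [set x | (if c x then F x else G x).1 = k] =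
    [set x | if c x then (F x).1 = k else (G x).1 = k].
    by apply/seteqP; split => x /=; case: (c x).
  exact: (SS_if hc (F1 k) (G1 k)).
- move=> S hS; have -> : [set x | S (if c x then F x else G x).2] =
    [set x | if c x then S (F x).2 else S (G x).2].
    by apply/seteqP; split => x /=; case: (c x).
  exact: (SS_if hc (F2 S hS) (G2 S hS)).
Qed.

Lemma good_leaf (k : 'I_3) a bb c :
  (forall A, seq_sigma bool A -> seq_sigma bool (a @^-1` A)) ->
  (forall B, seq_sigma 'I_3 B -> seq_sigma 'I_3 (bb @^-1` B)) ->
  (forall C, B2 C -> B2 (c @^-1` C)) ->
  goodF (fun x => (k, (a x.1.1, bb x.1.2, c x.2))).
Proof.
move=> hma hmb hmc; split.
- move=> k' /=; case: (eqVneq k k') => [->|hk].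
  + have -> : [set _ : state R | k' = k'] = setT by apply/seteqP; split.
    exact: sT.
  + have -> : [set _ : state R | k = k'] = set0.
      by apply/seteqP; split => x //= e; move/eqP: hk.
    exact: s0.
- by move=> S hS; exact: (SS_map hma hmb hmc hS).
Qed.

Definition Kstep' (x : state R) : 'I_3 * state R :=
  if `[< E0 beta x.2 >] then (i0, (x.1.1, x.1.2, Tmap beta i0 x.2))
  else if `[< E1 beta x.2 >] then (i1, (x.1.1, x.1.2, Tmap beta i1 x.2))
  else if `[< E2 beta x.2 >] then (i2, (x.1.1, x.1.2, Tmap beta i2 x.2))
  else if `[< C01 beta x.2 >] then
    (if x.1.1 0%N then (i1, (shiftO x.1.1, x.1.2, Tmap beta i1 x.2))
     else (i0, (shiftO x.1.1, x.1.2, Tmap beta i0 x.2)))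
  else if `[< C12 beta x.2 >] then
    (if x.1.1 0%N then (i2, (shiftO x.1.1, x.1.2, Tmap beta i2 x.2))
     else (i1, (shiftO x.1.1, x.1.2, Tmap beta i1 x.2)))
  else if `[< C02 beta x.2 >] then
    (if x.1.1 0%N then (i2, (shiftO x.1.1, x.1.2, Tmap beta i2 x.2))
     else (i0, (shiftO x.1.1, x.1.2, Tmap beta i0 x.2)))
  else if `[< C012 beta x.2 >] then
    (if x.1.2 0%N == i0 then (i0, (x.1.1, shiftU x.1.2, Tmap beta i0 x.2))
     else if x.1.2 0%N == i1 then (i1, (x.1.1, shiftU x.1.2, Tmap beta i1 x.2))
     else (i2, (x.1.1, shiftU x.1.2, Tmap beta i2 x.2)))
  else (i0, (x.1.1, x.1.2, id x.2)).

Lemma KstepE x : Kstep beta x = Kstep' x.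
Proof.
case: x => -[w u] z; rewrite /Kstep /Kstep' /=.
by case: (w 0%N); case: (I3P (u 0%N)) => ->.
Qed.

Lemma SS_asb (C : set (R * R)) : B2 C -> SS [set x : state R | `[< C x.2 >]].
Proof.
move=> hC; have -> : [set x : state R | `[< C x.2 >]] = [set x | C x.2].
  by apply/seteqP; split => x /= /asboolP.
exact: SS_z.
Qed.

Lemma SS_wb : SS [set x : state R | x.1.1 0%N].
Proof. exact: SS_w0. Qed.

Lemma SS_ub k : SS [set x : state R | x.1.2 0%N == k].
Proof.
have -> : [set x : state R | x.1.2 0%N == k] = [set x | x.1.2 0%N = k].
  by apply/seteqP; split => x /= /eqP.
exact: SS_u0.
Qed.

Lemma good_Kstep : goodF (Kstep beta).
Proof.
have -> : Kstep beta = Kstep' by apply: funext => x; rewrite KstepE.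
rewrite /Kstep'.
repeat (apply: good_if; first (exact: SS_wb || exact: SS_ub ||
  (apply: SS_asb; first [exact: BE0 | exact: BE1 | exact: BE2 | exact: BC01
   | exact: BC12 | exact: BC02 | exact: BC012]))).
all: first [ apply: (@good_leaf _ id id id)
  | apply: (@good_leaf _ id id) | apply: (@good_leaf _ shiftO id)
  | apply: (@good_leaf _ id shiftU) ];
  first [exact: id_meas | exact: shiftO_meas | exact: shiftU_meas | exact: Tmap_meas].
Qed.

Lemma Kiter_meas n S : SS S -> SS (Kiter beta n @^-1` S).
Proof.
elim: n S => [|n IH] S hS; first by [].
have -> : Kiter beta n.+1 @^-1` S = Kiter beta n @^-1` [set x | S (Kstep beta x).2] by [].
by apply: IH; apply: good_Kstep.2.
Qed.

Lemma phi_meas B : seq_sigma 'I_3 B -> SS (phi beta @^-1` B).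
Proof.
rewrite /seq_sigma; apply: gen_preimage => _ [n [k ->]].
have -> : phi beta @^-1` [set w | w n = k] =
   Kiter beta n @^-1` [set x | (Kstep beta x).1 = k] by [].
by apply: Kiter_meas; apply: good_Kstep.1.
Qed.
End Meas.

Lemma gen_if {T : Type} (G : set (set T)) (c : T -> bool) (P Q : set T) :
  <<s G >> [set x | c x] -> <<s G >> P -> <<s G >> Q ->
  <<s G >> [set x | if c x then P x else Q x].
Proof.
move=> hc hP hQ.
have -> : [set x | if c x then P x else Q x] =
  ([set x | c x] `&` P) `|` (~` [set x | c x] `&` Q).
  apply/seteqP; split => x /=; case: (c x) => /=.
  - by move=> h; left.
  - by move=> h; right.
  - by case => -[].
  - by case => -[].
by apply: sU; apply: sI => //; apply: sC.
Qed.

Lemma gen_const {T : Type} (G : set (set T)) (P : Prop) : <<s G >> [set _ | P].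
Proof.
case: (pselect P) => h.
- have -> : [set _ : T | P] = setT by apply/seteqP; split.
  exact: sT.
- have -> : [set _ : T | P] = set0 by apply/seteqP; split => x //=.
  exact: s0.
Qed.

Section PsiMeas.
Context (R : realType) (beta : R) (hb : 1 < beta <= 3/2).
Local Notation U := (seq_sigma 'I_3).
Local Notation d := ((beta - 1)^-1).

Definition upd (b : Upsilon) n k : Upsilon := fun i => if i == n then k else b i.

Lemma upd_id b n : upd b n (b n) = b.
Proof. by apply: funext => i; rewrite /upd; case: eqP => // ->. Qed.

Lemma findep n : forall (S : set Upsilon),
  (forall b b', (forall i, (i < n)%N -> b i = b' i) -> S b -> S b') -> U S.
Proof.
elim: n => [|n IH] S hS.
- case: (pselect (exists b, S b)) => [[b0 h0]|hn].
  + have -> : S = setT.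
      by apply/seteqP; split => // b _; apply: (hS b0 b _ h0).
    exact: sT.
  + have -> : S = set0.
      by apply/seteqP; split => // b hb'; apply: hn; exists b.
    exact: s0.
- pose Sk k := [set b | S (upd b n k)].
  have hSk k : U (Sk k).
    apply: IH => b b' hbb; rewrite /Sk /=; apply: hS => i hi.
    rewrite /upd; case: eqP => // hin; apply: hbb; lia.
  have -> : S = ([set b | b n = i0] `&` Sk i0) `|` ([set b | b n = i1] `&` Sk i1)
       `|` ([set b | b n = i2] `&` Sk i2).
    apply/seteqP; split => b /=.
    + move=> h; case: (I3P (b n)) => e.
      * by left; left; split => //; rewrite /Sk /= -e upd_id.
      * by left; right; split => //; rewrite /Sk /= -e upd_id.
      * by right; split => //; rewrite /Sk /= -e upd_id.
    + by case => [[|]|] [e]; rewrite /Sk /= -e upd_id.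
  by repeat apply: sU; apply: sI; (exact: cyl || exact: hSk).
Qed.

Definition sn (b : Upsilon) j n : R * R := (sq beta (@f1 R) b j n, sq beta (@f2 R) b j n).

Lemma sn_dep b b' j n : (forall i, (i < j + n)%N -> b i = b' i) -> sn b j n = sn b' j n.
Proof.
move=> hbb; rewrite /sn /sq /series /=; congr (_, _); apply: eq_big_nat => i /andP [_ hi];
  by rewrite hbb // ltn_add2l.
Qed.

Lemma nrm_lt (x y : R) : `|x| < y -> -y < x /\ x < y.
Proof. by rewrite ltr_norml => /andP. Qed.
Lemma nrm_gt (x y : R) : -y < x -> x < y -> `|x| < y.
Proof. by move=> h1 h2; rewrite ltr_norml h1 h2. Qed.

Lemma r_pos m : 0 < ((m.+1)%:R : R)^-1.
Proof. by rewrite invr_gt0 ltr0n. Qed.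

Lemma small_r (e : R) : 0 < e -> exists m, 2 * ((m.+1)%:R : R)^-1 < e.
Proof.
move=> e0; exists (Num.Def.trunc (2 / e)); have := Num.Theory.truncnS_gt (2 / e).
set M := ((Num.Def.trunc (2 / e)).+1)%:R => h.
have M0 : 0 < M by rewrite ltr0n.
have : M^-1 < (2 / e)^-1 by rewrite ltf_pV2 // ?posrE // divr_gt0.
rewrite invf_div; have := e0; move=> *.
have -> : 2 * M^-1 = (M^-1 * 2) by rewrite mulrC.
by rewrite -ltr_pdivlMr.
Qed.

Lemma pz_open j V : open V -> U [set b | V (proj_seq beta b j)].
Proof.
move=> /openP2 hV.
pose r m : R := ((m.+1)%:R)^-1.
pose Q m n := [set b : Upsilon | forall q, `|(sn b j n).1 - q.1| < r m ->
   `|(sn b j n).2 - q.2| < r m -> V q].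
have eq : [set b | V (proj_seq beta b j)] =
   \bigcup_m \bigcup_N \bigcap_n ([set _ : Upsilon | (n < N)%N] `|` Q m n).
  apply/seteqP; split => b.
  - move=> /hV [e e0 he].
    have [m hm] := small_r e0.
    have [N hN] := geo_small hb (r_pos m).
    exists m => //; exists N => // n _ /=.
    case: (ltnP n N) => hn; [by left|right].
    move=> q h1 h2.
    have [/andP [t1 t2] /andP [t3 t4]] := PS_tail hb b j n.
    have := hN n hn; rewrite -/(r m) => hr.
    rewrite -/(r m) in hm.
    move: h1 h2 => /nrm_lt [h1 h1'] /nrm_lt [h2 h2'].
    move: h1 h1' h2 h2'; rewrite /sn /= => h1 h1' h2 h2'.
    move: he t1 t2 t3 t4; generalize (proj_seq beta b j) => p he t1 t2 t3 t4.
    clearbody r.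
    by apply: he; apply: nrm_gt; lra.
  - case=> m _ [N _ hI].
    have [N' hN'] := geo_small hb (r_pos m).
    case: (hI (maxn N N') I) => /=.
      by rewrite ltnNge leq_maxl.
    move=> hQ; have [/andP [t1 t2] /andP [t3 t4]] := PS_tail hb b j (maxn N N').
    have := hN' (maxn N N') (leq_maxr _ _); rewrite -/(r m) => hr.
    move: hQ t1 t2 t3 t4.
    generalize (proj_seq beta b j) => p hQ t1 t2 t3 t4.
    by clearbody r; apply: hQ; rewrite /sn /=; apply: nrm_gt; lra.
rewrite eq; apply: sBU => m; apply: sBU => N; apply: sBI => n; apply: sU.
  exact: gen_const.
apply: (findep (n := (j + n)%N)) => b b' hbb; rewrite /Q /mkset (sn_dep hbb) //.
Qed.

Lemma pz_meas j C : borel2 R C -> U [set b | C (proj_seq beta b j)].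
Proof.
move=> hC; apply: (gen_preimage _ _ (fun b : Upsilon => proj_seq beta b j) _ C hC).
move=> V hV; exact: pz_open.
Qed.

Lemma pz_asb j C : borel2 R C -> U [set b | `[< C (proj_seq beta b j) >]].
Proof.
move=> hC; have -> : [set b | `[< C (proj_seq beta b j) >]] = [set b | C (proj_seq beta b j)].
  by apply/seteqP; split => x /= /asboolP.
exact: pz_meas.
Qed.

Lemma cnt_meas (g : Upsilon -> nat -> bool) : (forall j, U [set b | g b j]) ->
  forall j k, U [set b | cnt (g b) j = k].
Proof.
move=> hg; elim=> [|j IH] k /=; first exact: gen_const.
case: k => [|k].
- have -> : [set b | (cnt (g b) j + g b j)%N = 0%N] =
     ~` [set b | g b j] `&` [set b | cnt (g b) j = 0%N].
    apply/seteqP; split => b /=; case: (g b j); rewrite /= ?addn0 ?addn1.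
    + by [].
    + by move=> ->; split.
    + by case => h; exfalso; apply: h.
    + by case.
  apply: sI; [apply: sC; exact: hg|exact: IH].
- have -> : [set b | (cnt (g b) j + g b j)%N = k.+1] =
     ([set b | g b j] `&` [set b | cnt (g b) j = k]) `|`
     (~` [set b | g b j] `&` [set b | cnt (g b) j = k.+1]).
    apply/seteqP; split => b /=; case: (g b j); rewrite /= ?addn0 ?addn1.
    + by move=> [->]; left.
    + by move=> ->; right.
    + by case => -[] // _ ->.
    + by case => -[] // h; exfalso; apply: h.
  apply: sU; apply: sI; try exact: IH; try exact: hg.
  apply: sC; exact: hg.
Qed.

Lemma fC_meas j : U [set b | fC beta b j].
Proof. rewrite /fC /isC /pz; exact: (pz_asb j (BCset beta)). Qed.
Lemma f012_meas j : U [set b | f012 beta b j].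
Proof. rewrite /f012 /is012 /pz; exact: (pz_asb j (BC012 beta)). Qed.

Lemma upper_meas j : U [set b | b j = upper beta (pz beta b j)].
Proof.
have -> : [set b | b j = upper beta (pz beta b j)] =
   [set b | if `[< C01 beta (proj_seq beta b j) >] then b j = i1 else b j = i2].
  by apply/seteqP; split => b /=; rewrite /upper /pz; case: ifP.
apply: gen_if; [exact: (pz_asb j (BC01 beta)) | exact: cyl | exact: cyl].
Qed.

Lemma wpsi_meas A : seq_sigma bool A -> U (wpsi beta @^-1` A).
Proof.
apply: gen_preimage => _ [n [t ->]].
pose E := \bigcup_j ([set b | cnt (fC beta b) j = n] `&` [set b | fC beta b j]
   `&` [set b | b j = upper beta (pz beta b j)]).
have hE : U E.
  apply: sBU => j; apply: sI; [apply: sI|].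
  - exact: (cnt_meas fC_meas).
  - exact: fC_meas.
  - exact: upper_meas.
have eE : [set b | wpsi beta b n] = E.
  apply/seteqP; split => b /=.
  - by move=> /asboolP [j [h1 h2 h3]]; exists j => //.
  - by case=> j _ [[h1 h2] h3]; apply/asboolP; exists j.
case: t.
- by have -> : wpsi beta @^-1` [set w | w n = true] = E by rewrite -eE.
- have -> : wpsi beta @^-1` [set w | w n = false] = ~` E.
    by rewrite -eE; apply/seteqP; split => b /=; [move=> ->|move/negP/negbTE].
  exact: sC.
Qed.

Lemma Ek_meas n k : U [set b | `[< exists j, [/\ cnt (f012 beta b) j = n, f012 beta b j & b j = k] >]].
Proof.
have -> : [set b | `[< exists j, [/\ cnt (f012 beta b) j = n, f012 beta b j & b j = k] >]] =
  \bigcup_j ([set b | cnt (f012 beta b) j = n] `&` [set b | f012 beta b j] `&` [set b | b j = k]).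
  apply/seteqP; split => b /=.
  - by move=> /asboolP [j [h1 h2 h3]]; exists j => //.
  - by case=> j _ [[h1 h2] h3]; apply/asboolP; exists j.
apply: sBU => j; apply: sI; [apply: sI|].
- exact: (cnt_meas f012_meas).
- exact: f012_meas.
- exact: cyl.
Qed.

Lemma upsi_meas B : seq_sigma 'I_3 B -> U (upsi beta @^-1` B).
Proof.
apply: gen_preimage => _ [n [k ->]].
have -> : upsi beta @^-1` [set w | w n = k] =
  [set b | if `[< exists j, [/\ cnt (f012 beta b) j = n, f012 beta b j & b j = i1] >]
           then i1 = k else
           if `[< exists j, [/\ cnt (f012 beta b) j = n, f012 beta b j & b j = i2] >]
           then i2 = k else i0 = k].
  by apply/seteqP; split => b /=; rewrite /upsi; do 2 case: ifP => //.
apply: gen_if; first exact: Ek_meas.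
  exact: gen_const.
apply: gen_if; first exact: Ek_meas.
  exact: gen_const.
exact: gen_const.
Qed.

Lemma psi_meas S : state_sigma R S -> U (psi beta @^-1` S).
Proof.
rewrite /state_sigma; move: S; apply: gen_preimage => _ [A [B [C [hA hB hC ->]]]].
change (U ((wpsi beta @^-1` A `&` upsi beta @^-1` B) `&`
   [set b | C (proj_seq beta b 0)])).
apply: sI; [apply: sI|].
- exact: wpsi_meas.
- exact: upsi_meas.
- exact: pz_meas.
Qed.
End PsiMeas.

Unset Implicit Arguments. Set Strict Implicit.

Theorem lemma4p4 (R : realType) (beta : R) :
  1 < beta <= 3 / 2 ->
  (* phi' = phi|_Z maps Z into D, bijectively *)
  (forall x, Zset beta x -> Dset beta (phi beta x)) /\
  (forall x y, Zset beta x -> Zset beta y -> phi beta x = phi beta y -> x = y) /\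
  (forall b, Dset beta b -> exists2 x, Zset beta x & phi beta x = b) /\
  (* phi' is measurable *)
  trace_measurable (state_sigma R) (seq_sigma 'I_3) (Zset beta) (phi beta) /\
  (* its inverse D -> Z is measurable *)
  (exists psi : Upsilon -> state R,
     (forall b, Dset beta b -> Zset beta (psi b) /\ phi beta (psi b) = b) /\
     trace_measurable (seq_sigma 'I_3) (state_sigma R) (Dset beta) psi).
Proof.
move=> hb; split; [|split; [|split; [|split]]].
- by move=> x hx; exact: (phi_D hb hx).
- by move=> x y hx hy e; rewrite -(psi_phi hb hx) -(psi_phi hb hy) e.
- move=> b hbD; exists (psi beta b); first exact: (psi_Z hb hbD).
  exact: (phi_psi hb b).
- move=> B hB; exists (phi beta @^-1` B) => //; exact: (phi_meas hb hB).
- exists (psi beta); split.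
  + by move=> b hbD; split; [exact: (psi_Z hb hbD)|exact: (phi_psi hb b)].
  + move=> S hS; exists (psi beta @^-1` S) => //; exact: (psi_meas hb hS).
Qed.
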